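(* Let $\Omega\subset\mathbb{R}^N$ be a bounded domain and $j\in\{1,\dots,N\}$. There exist constants $\mu>0$ depending only on $\Omega$ and $C>0$ independent of $\varepsilon$ such that for every $0<\varepsilon<1$, every $x_0\in\Omega$ and every $t>0$: for any strategies $S_I,S_{II}$ of the parabolic game started at $(x_0,t)$, \[ \mathbb{P}^{x_0,t}_{S_I,S_{II}}[t_\tau\le0]\le Ce^{-\mu t}, \] and for any strategies $\tilde S_I,\tilde S_{II}$ of the elliptic game started at $x_0$, \[ \mathbb{P}^{x_0}_{\tilde S_I,\tilde S_{II}}\Big[\tfrac{\varepsilon^2\tau}{2}\ge t\Big]\le Ce^{-\mu t}, \] where $\tau$ denotes the number of steps until the respective game ends.
   Context: Parabolic game (step size $\varepsilon$): a token at $(x_k,t_k)$, $x_k\in\Omega$, $t_k>0$; Player I chooses a $j$-dimensional linear subspace $S\subset\mathbb{R}^N$, Player II chooses a unit vector $v\in S$, and the token moves to $(x_k+\varepsilon v,t_k-\varepsilon^2/2)$ or $(x_k-\varepsilon v,t_k-\varepsilon^2/2)$ with probability $1/2$ each; the game ends at the first step $\tau$ at which $x_\tau\notin\Omega$ or $t_\tau\le0$. Elliptic game: the same dynamics on positions only ($x_{k+1}=x_k\pm\varepsilon v$ with probability $1/2$ each), ending at the first step $\tau$ with $x_\tau\notin\Omega$, with no time constraint. Strategies are measurable functions of the history of positions (and, for Player II, of the current subspace $S$); $\mathbb{P}$ denotes the induced probability on game sequences. *)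

(* Defs.v *)
From mathcomp Require Import all_boot.
From Stdlib Require Import Reals ClassicalEpsilon.
Set Implicit Arguments.
Unset Strict Implicit.

Local Open Scope R_scope.

Definition vec (N : nat) := 'I_N -> R.

Definition vadd N (x y : vec N) : vec N := fun i => x i + y i.
Definition vscale N (a : R) (x : vec N) : vec N := fun i => a * x i.
Definition vnorm N (x : vec N) : R := sqrt (\big[Rplus/0]_(i < N) (x i * x i)).
Definition vdist N (x y : vec N) : R := vnorm (fun i => x i - y i).

Definition is_open N (U : vec N -> Prop) : Prop :=
  forall x, U x -> exists r, 0 < r /\ forall y, vdist x y < r -> U y.
Definition is_connected N (O : vec N -> Prop) : Prop :=
  forall U V : vec N -> Prop, is_open U -> is_open V ->
    (forall x, O x -> U x \/ V x) ->
    (exists x, O x /\ U x) -> (exists x, O x /\ V x) ->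
    exists x, O x /\ U x /\ V x.
Definition is_bounded N (O : vec N -> Prop) : Prop :=
  exists M, forall x, O x -> vnorm x <= M.
Definition bounded_domain N (O : vec N -> Prop) : Prop :=
  (exists x, O x) /\ is_open O /\ is_connected O /\ is_bounded O.

Definition lincomb N j (c : 'I_j -> R) (b : 'I_j -> vec N) : vec N :=
  fun i => \big[Rplus/0]_(k < j) (c k * b k i).
Definition is_subspace N (j : nat) (S : vec N -> Prop) : Prop :=
  exists b : 'I_j -> vec N,
    (forall c : 'I_j -> R, (forall i, lincomb c b i = 0) -> forall k, c k = 0) /\
    (forall v, S v <-> exists c : 'I_j -> R, forall i, v i = lincomb c b i).

(* Histories are lists with
   the most recent state first. *)
Definition valid_strategies N (j : nat) (H : Type)
  (SI : list H -> (vec N -> Prop)) (SII : list H -> (vec N -> Prop) -> vec N) : Prop :=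
  (forall h, is_subspace j (SI h)) /\
  (forall h S, is_subspace j S -> S (SII h S) /\ vnorm (SII h S) = 1).

(* Parabolic game: history entries are (position, time). [coin k = true]
   means the k-th move is +eps v, false means -eps v.
   [par_hist ... k] is the history (x_k,t_k) :: ... :: (x_0,t_0). *)
Fixpoint par_hist N (eps : R) (SI : list (vec N * R) -> (vec N -> Prop))
  (SII : list (vec N * R) -> (vec N -> Prop) -> vec N)
  (x0 : vec N) (t0 : R) (coin : nat -> bool) (k : nat) : list (vec N * R) :=
  match k with
  | O => [:: (x0, t0)]
  | S k' =>
      let h := par_hist eps SI SII x0 t0 coin k' in
      let cur := head (x0, t0) h in
      let v := SII h (SI h) in
      (vadd cur.1 (vscale (if coin k' then eps else - eps) v), cur.2 - eps ^ 2 / 2) :: h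
  end.

Definition par_state N eps SI SII (x0 : vec N) t0 coin k : vec N * R :=
  head (x0, t0) (par_hist eps SI SII x0 t0 coin k).

Fixpoint ell_hist N (eps : R) (SI : list (vec N) -> (vec N -> Prop))
  (SII : list (vec N) -> (vec N -> Prop) -> vec N)
  (x0 : vec N) (coin : nat -> bool) (k : nat) : list (vec N) :=
  match k with
  | O => [:: x0]
  | S k' =>
      let h := ell_hist eps SI SII x0 coin k' in
      let cur := head x0 h in
      let v := SII h (SI h) in
      vadd cur (vscale (if coin k' then eps else - eps) v) :: h
  end.

Definition ell_pos N eps SI SII (x0 : vec N) coin k : vec N :=
  head x0 (ell_hist eps SI SII x0 coin k).

(* Probability, under fair independent coins, of an event E that depends
   only on the first m coin flips: (1/2)^m * #{coin sequences of length m in E}. *)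
Definition indicator (P : Prop) : R :=
  if excluded_middle_informative P then 1 else 0.
Definition prob_first (m : nat) (E : (nat -> bool) -> Prop) : R :=
  \big[Rplus/0]_(b : m.-tuple bool)
     ((/ 2) ^ m * indicator (E (fun i => nth false b i))).

(* A number of steps after which both events below are determined:
   Z.to_nat (up (2 t / eps^2)) > 2 t / eps^2. *)
Definition horizon (eps t : R) : nat := Z.to_nat (up (2 * t / eps ^ 2)).

(* Parabolic event {t_tau <= 0}: no state (x_i,t_i) with t_i > 0 lies
   outside Omega (t is decreasing, so this is exactly t_tau <= 0). *)
Definition par_time_out N (O : vec N -> Prop) eps SI SII x0 t0 (coin : nat -> bool) : Prop :=
  forall i, 0 < (par_state eps SI SII x0 t0 coin i).2 ->
            O (par_state eps SI SII x0 t0 coin i).1.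

(* Elliptic event {eps^2 tau / 2 >= t}: every x_i with eps^2 i / 2 < t is in
   Omega (tau = +infinity if the game never ends). *)
Definition ell_long N (O : vec N -> Prop) eps SI SII x0 (t : R) (coin : nat -> bool) : Prop :=
  forall i : nat, eps ^ 2 * INR i / 2 < t -> O (ell_pos eps SI SII x0 coin i).

(* Main.v *)
Require Import Defs.
From HB Require Import structures.
From mathcomp Require Import all_boot.
From mathcomp Require Import zify.
From Stdlib Require Import ZArith Reals Lra Psatz ClassicalEpsilon FunctionalExtensionality PropExtensionality.
Set Implicit Arguments.
Unset Strict Implicit.
Local Open Scope R_scope.

HB.instance Definition _ := Monoid.isComLaw.Build R 0 Rplus (fun a b c => esym (Rplus_assoc a b c)) Rplus_comm Rplus_0_l.

Definition ccons (b : bool) (c : nat -> bool) : nat -> bool :=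
  fun i => match i with O => b | S i' => c i' end.
Definition upd (c : nat -> bool) (m : nat) (s : bool) : nat -> bool :=
  fun i => if i == m then s else c i.

Fixpoint Ex (m : nat) (F : (nat -> bool) -> R) : R :=
  match m with
  | O => F (fun _ => false)
  | S m' => / 2 * (Ex m' (fun c => F (ccons true c)) + Ex m' (fun c => F (ccons false c)))
  end.

Lemma Ex_ext m F G : (forall c, F c = G c) -> Ex m F = Ex m G.
Proof.
elim: m F G => [|m IH] F G H /=; first by apply H.
by congr (_ * (_ + _)); apply IH => c; apply H.
Qed.

Lemma Ex_mono m F G : (forall c, F c <= G c) -> Ex m F <= Ex m G.
Proof.
elim: m F G => [|m IH] F G H /=; first by apply H.
apply Rmult_le_compat_l; first lra.
apply Rplus_le_compat; apply IH => c; apply H.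
Qed.

Lemma Ex_scale m a F : Ex m (fun c => a * F c) = a * Ex m F.
Proof.
elim: m a F => [|m IH] a F //=.
rewrite (IH a (fun c => F (ccons true c))) (IH a (fun c => F (ccons false c))). ring.
Qed.

Lemma big_Rmult_l (T : finType) (a : R) (f : T -> R) :
  \big[Rplus/0]_(i : T) (a * f i) = a * \big[Rplus/0]_(i : T) f i.
Proof.
by rewrite (big_endo (fun x => a * x) (Rmult_plus_distr_l a) (Rmult_0_r a)).
Qed.

Lemma prob_Ex m F :
  \big[Rplus/0]_(b : m.-tuple bool) ((/ 2) ^ m * F (fun i => nth false b i)) = Ex m F.
Proof.
elim: m F => [|m IH] F.
  rewrite (eq_bigr (fun _ => F (fun _ => false))); last first.
    move=> b _; rewrite (tuple0 b) /= Rmult_1_l; f_equal; apply: functional_extensionality => i; by case: i.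
  by rewrite big_const card_tuple /= Rplus_0_r.
rewrite (reindex (fun p : bool * m.-tuple bool => [tuple of p.1 :: p.2])); last first.
  exists (fun t : m.+1.-tuple bool => (thead t, [tuple of behead t])).
    by move=> [b t] _ /=; rewrite theadE; congr pair; apply: val_inj.
  by move=> t _ /=; rewrite [in RHS](tuple_eta t).
rewrite -(pair_big xpredT xpredT (fun b (t : m.-tuple bool) =>
   (/ 2) ^ m.+1 * F (fun i => nth false [tuple of b :: t] i))) /=.
rewrite big_bool /=.
rewrite -(IH (fun c => F (ccons true c))) -(IH (fun c => F (ccons false c))).
rewrite Rmult_plus_distr_l -!big_Rmult_l.
congr (_ + _); apply: eq_bigr => b _.
  have -> : (fun i => nth false (true :: b) i) = ccons true (fun i => nth false b i).
    by apply: functional_extensionality => -[|i].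
  ring.
have -> : (fun i => nth false (false :: b) i) = ccons false (fun i => nth false b i).
  by apply: functional_extensionality => -[|i].
ring.
Qed.

Lemma ccons_upd b c m s : upd (ccons b c) m.+1 s = ccons b (upd c m s).
Proof. by apply: functional_extensionality => -[|i]. Qed.

Lemma Ex_last m F :
  Ex m.+1 F = Ex m (fun c => / 2 * (F (upd c m true) + F (upd c m false))).
Proof.
elim: m F => [|m IH] F.
  rewrite /=.
  have E : forall b, ccons b (fun _ => false) = upd (fun _ => false) 0 b.
    by move=> b; apply: functional_extensionality => -[|i].
  by rewrite !E.
transitivity (/ 2 * (Ex m.+1 (fun c => F (ccons true c)) + Ex m.+1 (fun c => F (ccons false c)))); first by [].
rewrite [Ex m.+1 (fun c => F (ccons true c))]IH [Ex m.+1 (fun c => F (ccons false c))]IH.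
set G := (fun c => / 2 * (F (upd c m.+1 true) + F (upd c m.+1 false))).
change (Ex m.+1 G) with (/2 * (Ex m (fun c => G (ccons true c)) + Ex m (fun c => G (ccons false c)))).
congr (_ * (_ + _)); apply: Ex_ext => c; by rewrite /G !ccons_upd.
Qed.

Definition dep_le (m : nat) (F : (nat -> bool) -> R) :=
  forall c c', (forall i : nat, leq i.+1 m -> c i = c' i) -> F c = F c'.

Lemma Ex_dep m k F : dep_le m F -> Ex (m + k) F = Ex m F.
Proof.
move=> HF; elim: k => [|k IH]; first by rewrite addn0.
rewrite addnS Ex_last -IH; apply: Ex_ext => c.
rewrite (HF (upd c (m + k) true) c) ?(HF (upd c (m + k) false) c); first field.
  by move=> i Hi; rewrite /upd; case: eqP => // Ei; move: Hi; rewrite Ei; lia.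
by move=> i Hi; rewrite /upd; case: eqP => // Ei; move: Hi; rewrite Ei; lia.
Qed.

Lemma ind_T (P : Prop) : P -> indicator P = 1.
Proof. by rewrite /indicator; case: excluded_middle_informative. Qed.
Lemma ind_F (P : Prop) : ~ P -> indicator P = 0.
Proof. by rewrite /indicator; case: excluded_middle_informative. Qed.
Lemma ind_01 (P : Prop) : 0 <= indicator P <= 1.
Proof. rewrite /indicator; destruct (excluded_middle_informative P); simpl; lra. Qed.

Definition sq N (x : vec N) : R := \big[Rplus/0]_(i < N) (x i * x i).

Lemma sq_nonneg N (x : vec N) : 0 <= sq x.
Proof.
rewrite /sq; apply: (big_ind (fun y => 0 <= y)); [lra | move=> a b; lra | move=> i _; nra].
Qed.

Lemma sq_pm N (x v : vec N) a :
  sq (vadd x (vscale a v)) + sq (vadd x (vscale (- a) v)) = 2 * sq x + 2 * a ^ 2 * sq v.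
Proof.
rewrite /sq -big_split -!big_Rmult_l -big_split /=.
apply: eq_bigr => i _; rewrite /vadd /vscale; ring.
Qed.

Lemma sq_step N (x v : vec N) (b : bool) a :
  sq (vadd x (vscale (if b then a else - a) v)) <= 2 * sq x + 2 * a ^ 2 * sq v.
Proof.
move: (sq_pm x v a) (sq_nonneg (vadd x (vscale a v))) (sq_nonneg (vadd x (vscale (-a) v))).
case: b => /=; lra.
Qed.

Lemma vnorm_sq N (x : vec N) : vnorm x ^ 2 = sq x.
Proof. rewrite /vnorm /= Rmult_1_r sqrt_sqrt //; exact: sq_nonneg. Qed.

Fixpoint ghist (Hh : Type) (h0 : Hh) (next : Hh -> bool -> Hh) (c : nat -> bool) (k : nat) : Hh :=
  match k with O => h0 | S k' => next (ghist h0 next c k') (c k') end.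

Lemma ghist_dep Hh (h0 : Hh) next k c c' :
  (forall i : nat, leq i.+1 k -> c i = c' i) -> ghist h0 next c k = ghist h0 next c' k.
Proof.
elim: k => [|k IH] H //=.
rewrite IH ?H //; move=> i Hi; apply: H; lia.
Qed.


Lemma game_bound N (Om : vec N -> Prop) (Q eps : R) (Hh : Type) (h0 : Hh)
  (next : Hh -> bool -> Hh) (pos : Hh -> vec N) (v : Hh -> vec N) :
  0 <= Q -> (forall x, Om x -> sq x <= Q) -> 0 < eps -> eps < 1 ->
  (forall h b, pos (next h b) = vadd (pos h) (vscale (if b then eps else - eps) (v h))) ->
  (forall h, sq (v h) = 1) -> Om (pos h0) ->
  forall K, Ex K (fun c => indicator (forall i : nat, leq i.+1 K -> Om (pos (ghist h0 next c i))))
    <= 2 * exp (- (/ (2 * (2 * Q + 2)) * eps ^ 2 * INR K)).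
Proof.
move=> HQ HOm He0 He1 Hpos Hv H0.
set B := 2 * Q + 2.
set A := 2 * B.
set lam := / A.
set X := fun c k => pos (ghist h0 next c k).
set surv := fun m c => forall i : nat, leq i.+1 m -> Om (X c i).
have HB : 2 <= B by rewrite /B; lra.
have HA : 0 < A by rewrite /A; lra.
have Hlam : 0 < lam by apply: Rinv_0_lt_compat.
have reach : forall c k, surv k c -> sq (X c k) <= B.
  move=> c [|k] Hs.
    rewrite /X /=; move: (HOm _ H0); rewrite /B; lra.
  rewrite /X /= Hpos.
  apply: Rle_trans (sq_step _ _ _ _) _.
  rewrite Hv; have := HOm _ (Hs k (leqnn _)); rewrite /B /X.
  have : eps ^ 2 <= 1 by nra.
  lra.
set W := fun m c => indicator (surv m c) * exp (lam * eps ^ 2 * INR m) * (A - sq (X c m)).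
have Wnn : forall m c, 0 <= W m c.
  move=> m c; rewrite /W.
  case: (classic (surv m c)) => Hs.
    rewrite ind_T //; have := reach c m Hs; have := exp_pos (lam * eps ^ 2 * INR m).
    rewrite /A; nra.
  rewrite ind_F //; lra.
have Xupd : forall c m s i, leq i m -> X (upd c m s) i = X c i.
  move=> c m s i Hi; rewrite /X; congr pos; apply: ghist_dep => k Hk.
  rewrite /upd; case: eqP => // E; lia.
have Xupd1 : forall c m s, X (upd c m s) m.+1 =
    vadd (X c m) (vscale (if s then eps else - eps) (v (ghist h0 next c m))).
  move=> c m s; rewrite /X /= Hpos.
  have -> : ghist h0 next (upd c m s) m = ghist h0 next c m.
    apply: ghist_dep => k Hk; rewrite /upd; case: eqP => // E; lia.
  by rewrite /upd eqxx.
have survupd : forall c m s, surv m.+1 (upd c m s) <-> surv m c /\ Om (X c m).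
  move=> c m s; split.
    move=> H; split.
      move=> i Hi; rewrite -(Xupd c m s i); last lia.
      by apply: H; lia.
    by rewrite -(Xupd c m s m) //; apply: H.
  move=> [H1 H2] i Hi; rewrite Xupd; last lia.
  case: (ltnP i m) => Him; first by apply: H1.
  have -> : i = m by lia.
  exact: H2.
have Wstep : forall m c, / 2 * (W m.+1 (upd c m true) + W m.+1 (upd c m false)) <= W m c.
  move=> m c.
  case: (classic (surv m c /\ Om (X c m))) => Hs.
    rewrite /W !ind_T; try (by apply/survupd); try exact: Hs.1.
    rewrite !Xupd1.
    set x := X c m. set w := v (ghist h0 next c m).
    have Hpm := sq_pm x w eps.
    rewrite Hv in Hpm.
    have Hsx : sq x <= Q := HOm _ Hs.2.
    have Hsx0 := sq_nonneg x.
    rewrite S_INR.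
    have -> : lam * eps ^ 2 * (INR m + 1) = lam * eps ^ 2 * INR m + lam * eps ^ 2 by ring.
    rewrite exp_plus.
    set E0 := exp (lam * eps ^ 2 * INR m).
    set u := lam * eps ^ 2.
    have HE0 : 0 < E0 by apply: exp_pos.
    have Hg1 : 0 <= A - sq x by rewrite /A /B; lra.
    have Hg2 : A - sq x <= A by lra.
    have key : exp u * (A - sq x - eps ^ 2) <= A - sq x.
      have h1 := exp_ineq1_le (- u).
      have h2 : exp u * exp (- u) = 1 by rewrite -exp_plus Rplus_opp_r exp_0.
      have hu : u * A = eps ^ 2 by rewrite /u /lam; field; lra.
      have hexp : 0 < exp u by apply: exp_pos.
      have h3 : A - sq x - eps ^ 2 <= (A - sq x) * exp (- u).
        have h4 := Rmult_le_compat_l _ _ _ Hg1 h1.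
        have hu0 : 0 <= u by rewrite /u; apply: Rmult_le_pos; [lra|nra].
        have h5 : 0 <= u * sq x by apply: Rmult_le_pos.
        have e : (A - sq x) * (1 + - u) = A - sq x - u * A + u * sq x by ring.
        lra.
      have := Rmult_le_compat_l _ _ _ (Rlt_le _ _ hexp) h3.
      have -> : exp u * ((A - sq x) * exp (- u)) = (A - sq x) * (exp u * exp (- u)) by ring.
      rewrite h2; lra.
    have := Rmult_le_compat_l _ _ _ (Rlt_le _ _ HE0) key.
    move: Hpm; rewrite /=; nra.
  have H0' : forall s, W m.+1 (upd c m s) = 0.
    move=> s; rewrite /W ind_F ?Rmult_0_l //.
    by move/survupd.
  rewrite !H0' ; have := Wnn m c; lra.
have Wbound : forall m, Ex m (W m) <= A.
  elim=> [|m IH].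
    rewrite /= /W.
    have -> : exp (lam * eps ^ 2 * INR 0%nat) = 1 by rewrite /= Rmult_0_r exp_0.
    move: (ind_01 (surv 0%nat (fun _ => false))) (sq_nonneg (X (fun _ => false) 0%nat)).
    rewrite /A /B; nra.
  rewrite Ex_last; apply: Rle_trans IH; apply: Ex_mono => c; exact: Wstep.
move=> K.
set EK := exp (lam * eps ^ 2 * INR K).
have HEK : 0 < EK by apply: exp_pos.
have Hlow : Ex K (fun c => (EK * B) * indicator (surv K c)) <= Ex K (W K).
  apply: Ex_mono => c; rewrite /W -/EK.
  case: (classic (surv K c)) => Hs.
    rewrite ind_T //; have := reach c K Hs; rewrite /A; nra.
  rewrite ind_F //; lra.
rewrite Ex_scale in Hlow.
have HW := Wbound K.
have Hind : Ex K (fun c => indicator (surv K c)) <= 2 / EK.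
  apply: (Rmult_le_reg_l (EK * B)); first nra.
  have -> : EK * B * (2 / EK) = A by rewrite /A; field; lra.
  lra.
apply: Rle_trans Hind _.
rewrite /EK /Rdiv -exp_Ropp; lra.
Qed.

Lemma tail_bound N (Om : vec N -> Prop) (Q eps t : R) (Hh : Type) (h0 : Hh)
  (next : Hh -> bool -> Hh) (pos : Hh -> vec N) (v : Hh -> vec N)
  (E : (nat -> bool) -> Prop) :
  0 <= Q -> (forall x, Om x -> sq x <= Q) -> 0 < eps -> eps < 1 -> 0 < t ->
  (forall h b, pos (next h b) = vadd (pos h) (vscale (if b then eps else - eps) (v h))) ->
  (forall h, sq (v h) = 1) -> Om (pos h0) ->
  (forall c, E c -> forall i : nat, eps ^ 2 * INR i / 2 < t -> Om (pos (ghist h0 next c i))) ->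
  prob_first (horizon eps t) E <=
    (2 * exp (/ (2 * (2 * Q + 2)))) * exp (- (2 * / (2 * (2 * Q + 2))) * t).
Proof.
move=> HQ HOm He0 He1 Ht Hpos Hv H0 HE.
set lam := / (2 * (2 * Q + 2)).
have Hlam : 0 < lam by apply: Rinv_0_lt_compat; lra.
set x := 2 * t / eps ^ 2.
have Hx : 0 < x by rewrite /x; apply: Rdiv_lt_0_compat; nra.
have Hxe : eps ^ 2 * x = 2 * t by rewrite /x; field; lra.
set H := horizon eps t.
have [Hup1 Hup2] := archimed x.
have HIH : INR H = IZR (up x).
  rewrite /H /horizon -/x INR_IZR_INZ Z2Nat.id //.
  apply: le_IZR; lra.
have HH1 : (1 <= H)%coq_nat.
  case: H HIH => [|n] HI; last lia.
  rewrite /= in HI; lra.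
set K := H.-1.
have HHK : H = (K + 1)%nat by rewrite /K; lia.
have HIK : INR K = INR H - 1 by rewrite HHK plus_INR /=; ring.
have Hev : forall c, E c -> (forall i : nat, leq i.+1 K -> Om (pos (ghist h0 next c i))).
  move=> c Hc i Hi; apply: HE => //.
  have : (i.+1 <= K)%coq_nat by apply/leP.
  move/le_INR; rewrite S_INR => Hi'.
  nra.
rewrite /prob_first (prob_Ex _ (fun c => indicator (E c))).
apply: (Rle_trans _ (Ex H (fun c => indicator (forall i : nat, leq i.+1 K -> Om (pos (ghist h0 next c i)))))).
  apply: Ex_mono => c.
  case: (classic (E c)) => Hc.
    rewrite !ind_T //; [lra | exact: Hev].
  rewrite (ind_F Hc); exact: (proj1 (ind_01 _)).
rewrite HHK Ex_dep; last first.
  move=> c c' Hcc'.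
  have Heq : forall i : nat, leq i.+1 K -> ghist h0 next c i = ghist h0 next c' i.
    move=> i Hi; apply: ghist_dep => k Hk; apply: Hcc'; lia.
  rewrite /indicator.
  have -> : (forall i : nat, leq i.+1 K -> Om (pos (ghist h0 next c i))) =
            (forall i : nat, leq i.+1 K -> Om (pos (ghist h0 next c' i))).
    apply: propositional_extensionality; split => Hh' i Hi.
      by rewrite -Heq //; apply: Hh'.
    by rewrite Heq //; apply: Hh'.
  by [].
apply: Rle_trans (game_bound HQ HOm He0 He1 Hpos Hv H0 K) _.
rewrite -/lam.
have -> : 2 * exp lam * exp (- (2 * lam) * t) = 2 * exp (- (lam * (2 * t - 1))).
  rewrite Rmult_assoc -exp_plus; congr (_ * exp _); ring.
apply: Rmult_le_compat_l; first lra.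
have Hle : - (lam * eps ^ 2 * INR K) <= - (lam * (2 * t - 1)).
  have : 2 * t - 1 <= eps ^ 2 * INR K.
    rewrite HIK; have : eps ^ 2 <= 1 by nra.
    have : eps ^ 2 * INR H > eps ^ 2 * x by apply: Rmult_lt_compat_l; nra.
    nra.
  nra.
case: (Rle_lt_or_eq_dec _ _ Hle) => h; last by rewrite h; lra.
by apply: Rlt_le; apply: exp_increasing.
Qed.

Lemma unit_sq N (x : vec N) : vnorm x = 1 -> sq x = 1.
Proof. by move=> H; rewrite -vnorm_sq H /=; ring. Qed.

Lemma ell_ghist N eps SI SII (x0 : vec N) c k :
  ell_hist eps SI SII x0 c k =
  ghist [:: x0] (fun h b => vadd (head x0 h) (vscale (if b then eps else - eps) (SII h (SI h))) :: h) c k.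
Proof. by elim: k => //= k ->. Qed.

Lemma par_ghist N eps SI SII (x0 : vec N) t c k :
  par_hist eps SI SII x0 t c k =
  ghist [:: (x0, t)] (fun h b => (vadd (head (x0, t) h).1 (vscale (if b then eps else - eps) (SII h (SI h))),
                                  (head (x0, t) h).2 - eps ^ 2 / 2) :: h) c k.
Proof. by elim: k => //= k ->. Qed.

Lemma par_time N eps SI SII (x0 : vec N) t c k :
  @eq R (par_state eps SI SII x0 t c k).2 (t - INR k * eps ^ 2 / 2).
Proof.
rewrite /par_state; elim: k => [|k IH]; first by rewrite /=; field.
rewrite S_INR [LHS]/= IH; field.
Qed.

Theorem lemma3p6 (N j : nat) (Omega : vec N -> Prop) :
  bounded_domain Omega -> (1 <= j)%nat -> (j <= N)%nat ->
  exists mu C : R, 0 < mu /\ 0 < C /\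
  forall (eps : R) (x0 : vec N) (t : R),
    0 < eps -> eps < 1 -> Omega x0 -> 0 < t ->
    (forall (SI : list (vec N * R) -> (vec N -> Prop))
            (SII : list (vec N * R) -> (vec N -> Prop) -> vec N),
        valid_strategies j SI SII ->
        prob_first (horizon eps t) (par_time_out Omega eps SI SII x0 t)
          <= C * exp (- mu * t)) /\
    (forall (SI : list (vec N) -> (vec N -> Prop))
            (SII : list (vec N) -> (vec N -> Prop) -> vec N),
        valid_strategies j SI SII ->
        prob_first (horizon eps t) (ell_long Omega eps SI SII x0 t)
          <= C * exp (- mu * t)).
Proof.
move=> [_ [_ [_ [M HM]]]] _ _.
have HOm : forall x, Omega x -> sq x <= M ^ 2.
  move=> x Hx; rewrite -vnorm_sq.
  have := HM x Hx; have : 0 <= vnorm x by apply: sqrt_pos.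
  move=> h1 h2; apply: pow_incr; lra.
have HQ : 0 <= M ^ 2 by apply: pow2_ge_0.
exists (2 * / (2 * (2 * M ^ 2 + 2))), (2 * exp (/ (2 * (2 * M ^ 2 + 2)))).
split; first by apply: Rmult_lt_0_compat; [lra | apply: Rinv_0_lt_compat; lra].
split; first by apply: Rmult_lt_0_compat; [lra | apply: exp_pos].
move=> eps x0 t He0 He1 Hx0 Ht; split.
- move=> SI SII [HSI HSII].
  apply: (tail_bound (pos := fun h => (head (x0, t) h).1) (v := fun h => SII h (SI h))
     (h0 := [:: (x0, t)]) (next := fun h b => (vadd (head (x0, t) h).1 (vscale (if b then eps else - eps) (SII h (SI h))),
                                  (head (x0, t) h).2 - eps ^ 2 / 2) :: h) HQ HOm He0 He1 Ht) => //.
  + by move=> h; apply: unit_sq; apply: (proj2 (HSII h (SI h) (HSI h))).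
  + move=> c Hc i Hi.
    have := Hc i; rewrite par_time.
    rewrite /par_state par_ghist => H; apply: H; lra.
- move=> SI SII [HSI HSII].
  apply: (tail_bound (pos := fun h => head x0 h) (v := fun h => SII h (SI h))
     (h0 := [:: x0]) (next := fun h b => vadd (head x0 h) (vscale (if b then eps else - eps) (SII h (SI h))) :: h) HQ HOm He0 He1 Ht) => //.
  + by move=> h; apply: unit_sq; apply: (proj2 (HSII h (SI h) (HSI h))).
  + move=> c Hc i Hi.
    have := Hc i; rewrite /ell_pos ell_ghist => H; apply: H; lra.
Qed.
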